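(* Let $R$ be a set of $n$ red points and $B$ a set of $n$ blue points, all distinct and on the line $y=0$, given sorted by $x$-coordinate. Then a minimum-weight non-crossing bichromatic perfect matching of $R\cup B$ (with arcs drawn above $y=0$) can be computed in $O(n)$ time. *)

(* Defs.v *)
From Stdlib Require Import Reals ZArith List.
Open Scope R_scope.

(* Red points have x-coordinates r 0 < ... < r (n-1),                *)
(* blue points b 0 < ... < b (n-1), all on the line y = 0.           *)
(* A bichromatic perfect matching is a bijection f of {0..n-1}:      *)
(* red i is matched with blue (f i).                                 *)

Definition strictly_sorted (n : nat) (x : nat -> R) : Prop :=
  forall i j, (i < j < n)%nat -> x i < x j.

Definition input_ok (n : nat) (r b : nat -> R) : Prop :=
  strictly_sorted n r /\ strictly_sorted n b /\
  (forall i j, (i < n)%nat -> (j < n)%nat -> r i <> b j).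

Definition is_bichromatic_perfect_matching (n : nat) (f : nat -> nat) : Prop :=
  (forall i, (i < n)%nat -> (f i < n)%nat) /\
  (forall i j, (i < n)%nat -> (j < n)%nat -> f i = f j -> i = j).

(* The arc of red i is drawn above y = 0 between its endpoints. *)
Definition arc_lo (r b : nat -> R) (f : nat -> nat) (i : nat) : R :=
  Rmin (r i) (b (f i)).
Definition arc_hi (r b : nat -> R) (f : nat -> nat) (i : nat) : R :=
  Rmax (r i) (b (f i)).

(* Two upper arcs with distinct endpoints cross iff their endpoints interleave. *)
Definition arcs_cross (r b : nat -> R) (f : nat -> nat) (i j : nat) : Prop :=
  arc_lo r b f i < arc_lo r b f j < arc_hi r b f i /\
  arc_hi r b f i < arc_hi r b f j.

Definition non_crossing (n : nat) (r b : nat -> R) (f : nat -> nat) : Prop :=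
  forall i j, (i < n)%nat -> (j < n)%nat -> i <> j -> ~ arcs_cross r b f i j.

Fixpoint sumR (n : nat) (F : nat -> R) : R :=
  match n with
  | O => 0
  | S m => sumR m F + F m
  end.

Definition weight (n : nat) (r b : nat -> R) (f : nat -> nat) : R :=
  sumR n (fun i => Rabs (r i - b (f i))).

Definition is_nc_matching (n : nat) (r b : nat -> R) (f : nat -> nat) : Prop :=
  is_bichromatic_perfect_matching n f /\ non_crossing n r b f.

Definition is_min_nc_matching (n : nat) (r b : nat -> R) (f : nat -> nat) : Prop :=
  is_nc_matching n r b f /\
  forall g, is_nc_matching n r b g -> weight n r b f <= weight n r b g.

(* Machine model: a real RAM with unit-cost instructions.            *)

Inductive instr : Type :=
| ZConst (d : nat) (k : Z)
| ZAdd (d s1 s2 : nat)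
| ZSub (d s1 s2 : nat)
| ZLoadInd (d a : nat)
| ZStoreInd (a s : nat)
| RLoadInd (d a : nat)
| RStoreInd (a s : nat)
| RAdd (d s1 s2 : nat)
| RSub (d s1 s2 : nat)
| JZLt (s1 s2 t : nat)
| JZEq (s1 s2 t : nat)
| JRLt (s1 s2 t : nat)
| Jmp (t : nat)
| Halt.

Record state : Type := mkState { pc : nat; zm : nat -> Z; rm : nat -> R }.

Definition upd {A : Type} (m : nat -> A) (a : nat) (v : A) : nat -> A :=
  fun x => if Nat.eqb x a then v else m x.

(* One step; None means the machine has halted (Halt or pc out of range). *)
Definition step (p : list instr) (s : state) : option state :=
  let z := zm s in let m := rm s in let k := S (pc s) in
  match nth_error p (pc s) with
  | None => None
  | Some Halt => None
  | Some (ZConst d v) => Some (mkState k (upd z d v) m)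
  | Some (ZAdd d s1 s2) => Some (mkState k (upd z d (z s1 + z s2)%Z) m)
  | Some (ZSub d s1 s2) => Some (mkState k (upd z d (z s1 - z s2)%Z) m)
  | Some (ZLoadInd d a) => Some (mkState k (upd z d (z (Z.to_nat (z a)))) m)
  | Some (ZStoreInd a s0) => Some (mkState k (upd z (Z.to_nat (z a)) (z s0)) m)
  | Some (RLoadInd d a) => Some (mkState k z (upd m d (m (Z.to_nat (z a)))))
  | Some (RStoreInd a s0) => Some (mkState k z (upd m (Z.to_nat (z a)) (m s0)))
  | Some (RAdd d s1 s2) => Some (mkState k z (upd m d (m s1 + m s2)))
  | Some (RSub d s1 s2) => Some (mkState k z (upd m d (m s1 - m s2)))
  | Some (JZLt s1 s2 t) => Some (mkState (if Z.ltb (z s1) (z s2) then t else k) z m)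
  | Some (JZEq s1 s2 t) => Some (mkState (if Z.eqb (z s1) (z s2) then t else k) z m)
  | Some (JRLt s1 s2 t) =>
      Some (mkState (if Rlt_dec (m s1) (m s2) then t else k) z m)
  | Some (Jmp t) => Some (mkState t z m)
  end.

(* exec p k s = Some s' : started in s, the machine halts after at most k
   steps, in final state s'. *)
Fixpoint exec (p : list instr) (k : nat) (s : state) : option state :=
  match step p s with
  | None => Some s
  | Some s' => match k with O => None | S k' => exec p k' s' end
  end.

(* Input encoding: Z[0] = n; Rm[i] = r i (i < n), Rm[n+j] = b j (j < n);
   all other cells 0.  Output: Z[1+i] = index of the blue partner of red i. *)
Definition init_state (n : nat) (r b : nat -> R) : state :=
  mkState 0
    (fun a => if Nat.eqb a 0 then Z.of_nat n else 0%Z)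
    (fun a => if Nat.ltb a n then r a
              else if Nat.ltb a (n + n) then b (a - n)%nat else 0).

Definition output_matching (s : state) : nat -> nat :=
  fun i => Z.to_nat (zm s (S i)).

(* Main.v *)
Require Import Defs.
From Stdlib Require Import Reals ZArith List Lia Lra Permutation Sorted.
Import ListNotations.

Open Scope R_scope.

Lemma sumR_ext n F G : (forall i, (i < n)%nat -> F i = G i) -> sumR n F = sumR n G.
Proof. induction n; simpl; intros H; auto. rewrite IHn by (intros; apply H; lia). rewrite H by lia; auto. Qed.

Lemma sumR_minus n F G : sumR n (fun i => F i - G i) = sumR n F - sumR n G.
Proof. induction n; simpl; [lra|]. rewrite IHn; lra. Qed.

Lemma sumR_le n F G : (forall i, (i < n)%nat -> F i <= G i) -> sumR n F <= sumR n G.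
Proof. induction n; simpl; intros H; [lra|]. assert (F n <= G n) by (apply H; lia).
 assert (sumR n F <= sumR n G) by (apply IHn; intros; apply H; lia). lra. Qed.

Definition lsum (l : list R) := fold_right Rplus 0 l.

Lemma lsum_app l1 l2 : lsum (l1 ++ l2) = lsum l1 + lsum l2.
Proof. induction l1; simpl; [lra|]. unfold lsum in *; simpl; rewrite IHl1; lra. Qed.

Lemma sumR_list n F : sumR n F = lsum (map F (seq 0 n)).
Proof. induction n; [reflexivity|]. cbn [sumR]. rewrite seq_S, map_app, lsum_app, IHn. simpl. lra. Qed.

Lemma lsum_perm l l' : Permutation l l' -> lsum l = lsum l'.
Proof. induction 1; unfold lsum in *; simpl; try lra. Qed.

Lemma sumR_perm n F f :
  (forall i, (i < n)%nat -> (f i < n)%nat) ->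
  (forall i j, (i < n)%nat -> (j < n)%nat -> f i = f j -> i = j) ->
  sumR n (fun i => F (f i)) = sumR n F.
Proof.
  intros Hr Hi. rewrite !sumR_list.
  replace (map (fun i => F (f i)) (seq 0 n)) with (map F (map f (seq 0 n)))
    by (rewrite map_map; auto).
  apply lsum_perm, Permutation_map, NoDup_Permutation_bis.
  - apply NoDup_map_NoDup_ForallPairs; [|apply seq_NoDup].
    intros x y Hx Hy. apply in_seq in Hx, Hy. apply Hi; lia.
  - rewrite length_map, !length_seq; lia.
  - intros x Hx. apply in_map_iff in Hx as [y [<- Hy]]. apply in_seq in Hy. apply in_seq. specialize (Hr y). lia.
Qed.

Open Scope R_scope.

Lemma rabs_le_iff x y : Rabs x <= y <-> -y <= x <= y.
Proof. unfold Rabs; destruct (Rcase_abs x); split; intros; lra. Qed.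
Lemma rabs_pos x : 0 <= x -> Rabs x = x.
Proof. intros; unfold Rabs; destruct (Rcase_abs x); lra. Qed.
Lemma rabs_neg x : x <= 0 -> Rabs x = - x.
Proof. intros; unfold Rabs; destruct (Rcase_abs x); lra. Qed.

Record ast := mkA { ai : nat; aj : nat; stk : list nat; col : bool; out : nat -> nat }.

Definition updn (f : nat -> nat) (a v : nat) : nat -> nat :=
  fun x => if Nat.eqb x a then v else f x.
Definition updr (f : nat -> R) (a : nat) (v : R) : nat -> R :=
  fun x => if Nat.eqb x a then v else f x.

Definition red_step (s : ast) : ast :=
  match stk s, col s with
  | t :: rest, true => mkA (S (ai s)) (aj s) rest true (updn (out s) (ai s) t)
  | _, _ => mkA (S (ai s)) (aj s) (ai s :: stk s) false (out s)
  end.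
Definition blue_step (s : ast) : ast :=
  match stk s, col s with
  | t :: rest, false => mkA (ai s) (S (aj s)) rest false (updn (out s) t (aj s))
  | _, _ => mkA (ai s) (S (aj s)) (aj s :: stk s) true (out s)
  end.
Definition choose_red (n : nat) (r b : nat -> R) (s : ast) : bool :=
  if Nat.ltb (ai s) n then
    (if Nat.eqb (aj s) n then true else if Rlt_dec (r (ai s)) (b (aj s)) then true else false)
  else false.
Definition astep n r b s := if choose_red n r b s then red_step s else blue_step s.
Fixpoint aiter n r b (k : nat) (s : ast) : ast :=
  match k with O => s | S k' => aiter n r b k' (astep n r b s) end.
Definition ainit := mkA 0 0 [] false (fun _ => 0%nat).

Definition posc (r b : nat -> R) (c : bool) (t : nat) : R := if c then b t else r t.
Definition matched (s : ast) (t : nat) : Prop :=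
  (t < ai s)%nat /\ ~ (col s = false /\ In t (stk s)).

Definition phi_inv n r b (s : ast) : Prop :=
  exists a v (pR pB : nat -> R),
    (forall i', (ai s <= i' < n)%nat -> a <= r i') /\
    (forall j', (aj s <= j' < n)%nat -> a <= b j') /\
    (forall i', (i' < ai s)%nat -> Rabs (v - pR i') <= a - r i') /\
    (forall j', (j' < aj s)%nat -> Rabs (v - pB j') <= a - b j') /\
    (forall i' j', (i' < ai s)%nat -> (j' < aj s)%nat -> Rabs (pR i' - pB j') <= Rabs (r i' - b j')) /\
    (forall u, In u (stk s) -> if col s then v - pB u = a - b u else pR u - v = a - r u) /\
    (forall t, matched s t -> pR t - pB (out s t) = Rabs (r t - b (out s t))).

Record Inv n r b (s : ast) : Prop := {
  iv_i : (ai s <= n)%nat; iv_j : (aj s <= n)%nat;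
  iv_ord1 : forall i' j', (i' < ai s)%nat -> (aj s <= j' < n)%nat -> r i' < b j';
  iv_ord2 : forall i' j', (j' < aj s)%nat -> (ai s <= i' < n)%nat -> b j' < r i';
  iv_len : if col s then (ai s <= aj s /\ length (stk s) = aj s - ai s)%nat
           else (aj s <= ai s /\ length (stk s) = ai s - aj s)%nat;
  iv_stkb : forall t, In t (stk s) -> if col s then (t < aj s)%nat else (t < ai s)%nat;
  iv_sorted : StronglySorted (fun x y => (y < x)%nat) (stk s);
  iv_outlt : forall t, matched s t -> (out s t < aj s)%nat;
  iv_inj : forall t1 t2, matched s t1 -> matched s t2 -> out s t1 = out s t2 -> t1 = t2;
  iv_bstk : col s = true -> forall t, matched s t -> ~ In (out s t) (stk s);
  iv_nc : forall t1 t2, matched s t1 -> matched s t2 -> t1 <> t2 -> ~ arcs_cross r b (out s) t1 t2;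
  iv_nc2 : forall t u, matched s t -> In u (stk s) ->
     ~ (arc_lo r b (out s) t < posc r b (col s) u < arc_hi r b (out s) t);
  iv_phi : phi_inv n r b s
}.

Lemma arc_lo_ext r b f g t : f t = g t -> arc_lo r b f t = arc_lo r b g t.
Proof. unfold arc_lo; intros ->; auto. Qed.
Lemma arc_hi_ext r b f g t : f t = g t -> arc_hi r b f t = arc_hi r b g t.
Proof. unfold arc_hi; intros ->; auto. Qed.
Lemma cross_ext r b f g t1 t2 : f t1 = g t1 -> f t2 = g t2 ->
  arcs_cross r b f t1 t2 -> arcs_cross r b g t1 t2.
Proof. unfold arcs_cross; intros H1 H2.
  rewrite (arc_lo_ext r b f g t1), (arc_lo_ext r b f g t2), (arc_hi_ext r b f g t1), (arc_hi_ext r b f g t2); auto. Qed.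

Lemma arc_lo_le r b f t : arc_lo r b f t <= r t /\ arc_lo r b f t <= b (f t).
Proof. unfold arc_lo; split; [apply Rmin_l|apply Rmin_r]. Qed.
Lemma arc_hi_ge r b f t : r t <= arc_hi r b f t /\ b (f t) <= arc_hi r b f t.
Proof. unfold arc_hi; split; [apply Rmax_l|apply Rmax_r]. Qed.
Lemma arc_hi_lt r b f t x : r t < x -> b (f t) < x -> arc_hi r b f t < x.
Proof. unfold arc_hi; intros; apply Rmax_lub_lt; auto. Qed.
Lemma arc_lo_rb r b f t : b (f t) < r t -> arc_lo r b f t = b (f t) /\ arc_hi r b f t = r t.
Proof. unfold arc_lo, arc_hi; intros; split; [apply Rmin_right|apply Rmax_left]; lra. Qed.
Lemma arc_lo_br r b f t : r t < b (f t) -> arc_lo r b f t = r t /\ arc_hi r b f t = b (f t).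
Proof. unfold arc_lo, arc_hi; intros; split; [apply Rmin_left|apply Rmax_right]; lra. Qed.

Lemma ss_head (l : list nat) t u : StronglySorted (fun x y => (y < x)%nat) (t :: l) -> In u l -> (u < t)%nat.
Proof. intros H Hu. apply StronglySorted_inv in H as [_ H]. rewrite Forall_forall in H. apply H; auto. Qed.

Open Scope R_scope.

Lemma sr_lt n r b i j : input_ok n r b -> (i < j < n)%nat -> r i < r j.
Proof. intros [H _]; apply H. Qed.
Lemma sb_lt n r b i j : input_ok n r b -> (i < j < n)%nat -> b i < b j.
Proof. intros [_ [H _]]; apply H. Qed.
Lemma sr_le n r b i j : input_ok n r b -> (i <= j < n)%nat -> r i <= r j.
Proof. intros H Hij. destruct (Nat.eq_dec i j); [subst; lra|]. left; apply (sr_lt n r b); auto; lia. Qed.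
Lemma sb_le n r b i j : input_ok n r b -> (i <= j < n)%nat -> b i <= b j.
Proof. intros H Hij. destruct (Nat.eq_dec i j); [subst; lra|]. left; apply (sb_lt n r b); auto; lia. Qed.

Lemma inv_red_pop n r b i j t0 rest o :
  input_ok n r b -> Inv n r b (mkA i j (t0 :: rest) true o) -> (i < n)%nat ->
  (j = n \/ r i < b j) ->
  Inv n r b (mkA (S i) j rest true (updn o i t0)).
Proof.
  intros Hok [Hi Hj Ho1 Ho2 Hl Hsb Hss Hol Hin Hbs Hnc Hnc2 Hphi] Hin' Hch; simpl in *.
  assert (Ht0j : (t0 < j)%nat) by (apply (Hsb t0); left; auto).
  assert (Hb0 : b t0 < r i) by (apply Ho2; lia).
  assert (Mo : forall t, matched (mkA i j (t0 :: rest) true o) t <-> (t < i)%nat)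
    by (intros; unfold matched; simpl; split; [tauto|intuition discriminate]).
  assert (Mn : forall t, matched (mkA (S i) j rest true (updn o i t0)) t <-> (t < S i)%nat)
    by (intros; unfold matched; simpl; split; [tauto|intuition discriminate]).
  assert (Eo : forall t, (t < i)%nat -> updn o i t0 t = o t)
    by (intros t Ht; unfold updn; destruct (Nat.eqb_spec t i); [lia|auto]).
  assert (Ei : updn o i t0 i = t0) by (unfold updn; rewrite Nat.eqb_refl; auto).
  assert (Hhi : forall t, (t < i)%nat -> arc_hi r b o t < r i).
  { intros t Ht. apply arc_hi_lt. apply (sr_lt n r b); auto; lia.
    apply Ho2; [apply Hol, Mo; auto| lia]. }
  constructor; simpl.
  - lia.
  - lia.
  - intros i' j' Hi' Hj'. destruct (Nat.eq_dec i' i); [subst|apply Ho1; lia].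
    destruct Hch as [Hch|Hch]; [lia|]. eapply Rlt_le_trans; [apply Hch|]. apply (sb_le n r b); auto; lia.
  - intros i' j' Hj' Hi'. apply Ho2; lia.
  - simpl in Hl. lia.
  - intros t Ht. apply Hsb; right; auto.
  - apply StronglySorted_inv in Hss; tauto.
  - intros t Ht%Mn. destruct (Nat.eq_dec t i); [subst; rewrite Ei; auto|]. rewrite Eo by lia. apply Hol, Mo; lia.
  - intros t1 t2 H1%Mn H2%Mn.
    destruct (Nat.eq_dec t1 i); destruct (Nat.eq_dec t2 i); subst; auto.
    + rewrite Ei, Eo by lia. intros E. exfalso. apply (Hbs eq_refl t2); [apply Mo; lia|]. rewrite <- E; left; auto.
    + rewrite Ei, Eo by lia. intros E. exfalso. apply (Hbs eq_refl t1); [apply Mo; lia|]. rewrite E; left; auto.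
    + rewrite !Eo by lia. intros; apply Hin; auto; apply Mo; lia.
  - intros _ t Ht%Mn Hin2. destruct (Nat.eq_dec t i).
    + subst. rewrite Ei in Hin2. pose proof (ss_head _ _ _ Hss Hin2). lia.
    + rewrite Eo in Hin2 by lia. apply (Hbs eq_refl t); [apply Mo; lia| right; auto].
  - pose proof (arc_lo_rb r b (updn o i t0) i) as Hlr. rewrite Ei in Hlr. destruct (Hlr Hb0) as [Hl1 Hl2].

    intros t1 t2 H1%Mn H2%Mn Hne Hc.
    destruct (Nat.eq_dec t1 i); destruct (Nat.eq_dec t2 i); subst; [lia| | |].
    + unfold arcs_cross in Hc. rewrite (arc_hi_ext r b _ o t2) in Hc by (apply Eo; lia).
      specialize (Hhi t2 ltac:(lia)). lra.
    + unfold arcs_cross in Hc. rewrite (arc_hi_ext r b _ o t1), (arc_lo_ext r b _ o t1) in Hc by (apply Eo; lia).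
      apply (Hnc2 t1 t0); [apply Mo; lia|left; auto|]. simpl. lra.
    + apply (Hnc t1 t2); [apply Mo; lia|apply Mo; lia|auto|]. revert Hc; apply cross_ext; apply Eo; lia.
  - intros t u Ht%Mn Hu Hc. destruct (Nat.eq_dec t i).
    + subst. destruct (arc_lo_rb r b (updn o i t0) i) as [E1 E2]; [rewrite Ei; auto|].
      rewrite E1, Ei in Hc. simpl in Hc. pose proof (ss_head _ _ _ Hss Hu).
      assert (b u < b t0) by (apply (sb_lt n r b); auto; lia). lra.
    + rewrite (arc_hi_ext r b _ o t), (arc_lo_ext r b _ o t) in Hc by (apply Eo; lia).
      apply (Hnc2 t u); [apply Mo; lia|right; auto|auto].
  - destruct Hphi as (a & v & pR & pB & P1 & P2 & P3 & P4 & P5 & P6 & P7). cbn [ai aj stk col out] in P1, P2, P3, P4, P5, P6, P7.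
    assert (Hai : a <= r i) by (apply P1; lia).
    exists (r i), (v + (r i - a)), (updr pR i (v + (r i - a))), pB. simpl.
    assert (ER : forall t, (t < i)%nat -> updr pR i (v + (r i - a)) t = pR t)
      by (intros t Ht; unfold updr; destruct (Nat.eqb_spec t i); [lia|auto]).
    assert (ERi : updr pR i (v + (r i - a)) i = v + (r i - a)) by (unfold updr; rewrite Nat.eqb_refl; auto).
    split; [|split; [|split; [|split; [|split; [|split]]]]].
    + intros i' Hi'. apply (sr_le n r b); auto; lia.
    + intros j' Hj'. destruct Hch as [Hch|Hch]; [lia|]. 
      left. eapply Rlt_le_trans; [apply Hch|]. apply (sb_le n r b); auto; lia.
    + intros i' Hi'. destruct (Nat.eq_dec i' i); [subst; rewrite ERi; apply rabs_le_iff; lra|].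
      rewrite ER by lia. specialize (P3 i' ltac:(lia)). apply rabs_le_iff in P3. apply rabs_le_iff.  lra.
    + intros j' Hj'. specialize (P4 j' Hj'). apply rabs_le_iff in P4. apply rabs_le_iff.  lra.
    + intros i' j' Hi' Hj'. destruct (Nat.eq_dec i' i); [subst|rewrite ER by lia; apply P5; lia].
      rewrite ERi. specialize (P4 j' Hj'). apply rabs_le_iff in P4. apply rabs_le_iff.
      assert (b j' < r i) by (apply Ho2; lia). rewrite rabs_pos by lra.  lra.
    + intros u Hu. specialize (P6 u (or_intror Hu)). simpl in P6.  lra.
    + intros t Ht%Mn. destruct (Nat.eq_dec t i).
      * subst. rewrite ERi, Ei. specialize (P6 t0 (or_introl eq_refl)). simpl in P6.
        rewrite rabs_pos by lra.  lra.
      * rewrite ER, Eo by lia. apply P7, Mo; lia.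
Qed.

Open Scope R_scope.

Lemma inv_red_push n r b i j st c o :
  input_ok n r b -> Inv n r b (mkA i j st c o) -> (i < n)%nat ->
  (j = n \/ r i < b j) -> (st = [] \/ c = false) ->
  Inv n r b (mkA (S i) j (i :: st) false o).
Proof.
  intros Hok [Hi Hj Ho1 Ho2 Hl Hsb Hss Hol Hin Hbs Hnc Hnc2 Hphi] Hin' Hch Hst; simpl in *.
  assert (Mf : forall t, matched (mkA (S i) j (i :: st) false o) t ->
      matched (mkA i j st c o) t /\ (t < i)%nat).
  { intros t [H1 H2]; simpl in *. assert (t <> i) by (intro; subst; apply H2; auto).
    split; [|lia]. split; simpl; [lia|]. intros [_ H3]; apply H2; auto. }
  assert (Hsti : forall u, In u st -> c = false /\ (u < i)%nat).
  { intros u Hu. destruct Hst as [ -> | -> ]; [destruct Hu|]. split; [auto| apply (Hsb u Hu)]. }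
  assert (Hhi : forall t, matched (mkA i j st c o) t -> arc_hi r b o t < r i).
  { intros t Ht. pose proof (proj1 Ht) as Ht'; simpl in Ht'. apply arc_hi_lt. apply (sr_lt n r b); auto; lia.
    apply Ho2; [apply Hol; auto| lia]. }
  constructor; cbn [ai aj stk col out].
  - lia.
  - lia.
  - intros i' j' Hi' Hj'. destruct (Nat.eq_dec i' i); [subst|apply Ho1; lia].
    destruct Hch as [Hch|Hch]; [lia|]. eapply Rlt_le_trans; [apply Hch|]. apply (sb_le n r b); auto; lia.
  - intros i' j' Hj' Hi'. apply Ho2; lia.
  - destruct c; [destruct Hst as [ -> |]; [cbn [length] in *; lia|discriminate]|]. cbn [length] in Hl |- *; lia.
  - intros t [<-|Ht]; [lia|]. apply Hsti in Ht; lia.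
  - constructor; auto. rewrite Forall_forall. intros u Hu. apply Hsti in Hu; lia.
  - intros t Ht%Mf. apply Hol; tauto.
  - intros t1 t2 H1%Mf H2%Mf. apply Hin; tauto.
  - discriminate.
  - intros t1 t2 H1%Mf H2%Mf. apply Hnc; tauto.
  - intros t u Ht%Mf [<-|Hu] Hc; simpl in Hc.
    + destruct Ht as [Ht _]. specialize (Hhi t Ht). lra.
    + destruct (Hsti u Hu) as [Hc0 _]. subst c. apply (Hnc2 t u); tauto.
  - destruct Hphi as (a & v & pR & pB & P1 & P2 & P3 & P4 & P5 & P6 & P7). cbn [ai aj stk col out] in P1, P2, P3, P4, P5, P6, P7.
    assert (Hai : a <= r i) by (apply P1; lia).
    remember (if c then v + (r i - a) else v - (r i - a)) as v' eqn:Hv'.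
    assert (Hvv : - (r i - a) <= v' - v <= r i - a) by (destruct c; subst; lra).
    exists (r i), v', (updr pR i v'), pB. simpl.
    assert (ER : forall t, (t < i)%nat -> updr pR i v' t = pR t)
      by (intros t Ht; unfold updr; destruct (Nat.eqb_spec t i); [lia|auto]).
    assert (ERi : updr pR i v' i = v') by (unfold updr; rewrite Nat.eqb_refl; auto).
    split; [|split; [|split; [|split; [|split; [|split]]]]].
    + intros i' Hi'. apply (sr_le n r b); auto; lia.
    + intros j' Hj'. destruct Hch as [Hch|Hch]; [lia|].
      left. eapply Rlt_le_trans; [apply Hch|]. apply (sb_le n r b); auto; lia.
    + intros i' Hi'. destruct (Nat.eq_dec i' i); [subst; rewrite ERi; apply rabs_le_iff; lra|].
      rewrite ER by lia. specialize (P3 i' ltac:(lia)). apply rabs_le_iff in P3. apply rabs_le_iff. lra.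
    + intros j' Hj'. specialize (P4 j' Hj'). apply rabs_le_iff in P4. apply rabs_le_iff. lra.
    + intros i' j' Hi' Hj'. destruct (Nat.eq_dec i' i); [subst|rewrite ER by lia; apply P5; lia].
      rewrite ERi. specialize (P4 j' Hj'). apply rabs_le_iff in P4. apply rabs_le_iff.
      assert (b j' < r i) by (apply Ho2; lia). rewrite rabs_pos by lra. lra.
    + intros u [<-|Hu]; [rewrite ERi; lra|].
      destruct (Hsti u Hu) as [Hc0 Hu']. subst c. rewrite ER by lia. specialize (P6 u Hu). simpl in P6. lra.
    + intros t Ht%Mf. rewrite ER by tauto. apply P7; tauto.
Qed.

Lemma inv_blue_pop n r b i j t0 rest o :
  input_ok n r b -> Inv n r b (mkA i j (t0 :: rest) false o) -> (j < n)%nat ->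
  (i = n \/ b j < r i) ->
  Inv n r b (mkA i (S j) rest false (updn o t0 j)).
Proof.
  intros Hok [Hi Hj Ho1 Ho2 Hl Hsb Hss Hol Hin Hbs Hnc Hnc2 Hphi] Hjn Hch; simpl in *.
  assert (Ht0i : (t0 < i)%nat) by (apply (Hsb t0); left; auto).
  assert (Hb0 : r t0 < b j) by (apply Ho1; lia).
  assert (Mn : forall t, matched (mkA i (S j) rest false (updn o t0 j)) t ->
     t = t0 \/ (matched (mkA i j (t0 :: rest) false o) t /\ t <> t0)).
  { intros t [H1 H2]; simpl in *. destruct (Nat.eq_dec t t0); [left; auto|right].
    split; auto. split; simpl; auto. intros [_ [H3|H3]]; [congruence|]. apply H2; auto. }
  assert (Mt0 : ~ matched (mkA i j (t0 :: rest) false o) t0)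
    by (intros [_ H]; apply H; simpl; auto).
  assert (Eo : forall t, t <> t0 -> updn o t0 j t = o t)
    by (intros t Ht; unfold updn; destruct (Nat.eqb_spec t t0); [lia|auto]).
  assert (Ei : updn o t0 j t0 = j) by (unfold updn; rewrite Nat.eqb_refl; auto).
  assert (Hhi : forall t, matched (mkA i j (t0 :: rest) false o) t -> arc_hi r b o t < b j).
  { intros t Ht. pose proof (proj1 Ht) as Ht'; simpl in Ht'. apply arc_hi_lt; [apply Ho1; lia|].
    specialize (Hol t Ht). simpl in Hol. apply (sb_lt n r b); auto; lia. }
  constructor; cbn [ai aj stk col out].
  - lia.
  - lia.
  - intros i' j' Hi' Hj'. apply Ho1; lia.
  - intros i' j' Hj' Hi'. destruct (Nat.eq_dec j' j); [subst|apply Ho2; lia].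
    destruct Hch as [Hch|Hch]; [lia|]. eapply Rlt_le_trans; [apply Hch|]. apply (sr_le n r b); auto; lia.
  - simpl in Hl. lia.
  - intros t Ht. apply Hsb; right; auto.
  - apply StronglySorted_inv in Hss; tauto.
  - intros t Ht%Mn. destruct Ht as [ -> |[Ht Hne]]; [rewrite Ei; lia|]. rewrite Eo by auto. specialize (Hol t Ht); simpl in Hol; lia.
  - intros t1 t2 H1%Mn H2%Mn.
    destruct H1 as [ -> |[H1 N1]]; destruct H2 as [ -> |[H2 N2]]; auto.
    + rewrite Ei, Eo by auto. intros E. specialize (Hol t2 H2); simpl in Hol; lia.
    + rewrite Ei, Eo by auto. intros E. specialize (Hol t1 H1); simpl in Hol; lia.
    + rewrite !Eo by auto. apply Hin; auto.
  - discriminate.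
  - pose proof (arc_lo_br r b (updn o t0 j) t0) as Hlr. rewrite Ei in Hlr. destruct (Hlr Hb0) as [Hl1 Hl2].
    intros t1 t2 H1%Mn H2%Mn Hne Hc.
    destruct H1 as [ -> |[H1 N1]]; destruct H2 as [ -> |[H2 N2]]; [lia| | |].
    + unfold arcs_cross in Hc. rewrite (arc_hi_ext r b _ o t2) in Hc by (apply Eo; auto).
      specialize (Hhi t2 H2). lra.
    + unfold arcs_cross in Hc. rewrite (arc_hi_ext r b _ o t1), (arc_lo_ext r b _ o t1) in Hc by (apply Eo; auto).
      apply (Hnc2 t1 t0); [auto|left; auto|]. simpl. lra.
    + apply (Hnc t1 t2); auto. revert Hc; apply cross_ext; apply Eo; auto.
  - intros t u Ht%Mn Hu Hc. simpl in Hc. destruct Ht as [ -> |[Ht Ne]].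
    + destruct (arc_lo_br r b (updn o t0 j) t0) as [E1 E2]; [rewrite Ei; auto|].
      rewrite E1 in Hc. pose proof (ss_head _ _ _ Hss Hu).
      assert (r u < r t0) by (apply (sr_lt n r b); auto; lia). lra.
    + rewrite (arc_hi_ext r b _ o t), (arc_lo_ext r b _ o t) in Hc by (apply Eo; auto).
      apply (Hnc2 t u); [auto|right; auto|auto].
  - destruct Hphi as (a & v & pR & pB & P1 & P2 & P3 & P4 & P5 & P6 & P7). cbn [ai aj stk col out] in P1, P2, P3, P4, P5, P6, P7.
    assert (Hai : a <= b j) by (apply P2; lia).
    exists (b j), (v - (b j - a)), pR, (updr pB j (v - (b j - a))). simpl.
    assert (ER : forall t, (t < j)%nat -> updr pB j (v - (b j - a)) t = pB t)
      by (intros t Ht; unfold updr; destruct (Nat.eqb_spec t j); [lia|auto]).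
    assert (ERi : updr pB j (v - (b j - a)) j = v - (b j - a)) by (unfold updr; rewrite Nat.eqb_refl; auto).
    split; [|split; [|split; [|split; [|split; [|split]]]]].
    + intros i' Hi'. destruct Hch as [Hch|Hch]; [lia|].
      left. eapply Rlt_le_trans; [apply Hch|]. apply (sr_le n r b); auto; lia.
    + intros j' Hj'. apply (sb_le n r b); auto; lia.
    + intros i' Hi'. specialize (P3 i' Hi'). apply rabs_le_iff in P3. apply rabs_le_iff. lra.
    + intros j' Hj'. destruct (Nat.eq_dec j' j); [subst; rewrite ERi; apply rabs_le_iff; lra|].
      rewrite ER by lia. specialize (P4 j' ltac:(lia)). apply rabs_le_iff in P4. apply rabs_le_iff. lra.
    + intros i' j' Hi' Hj'. destruct (Nat.eq_dec j' j); [subst|rewrite ER by lia; apply P5; lia].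
      rewrite ERi. specialize (P3 i' Hi'). apply rabs_le_iff in P3. apply rabs_le_iff.
      assert (r i' < b j) by (apply Ho1; lia). rewrite rabs_neg by lra. lra.
    + intros u Hu. specialize (P6 u (or_intror Hu)). simpl in P6. lra.
    + intros t Ht%Mn. destruct Ht as [ -> |[Ht Ne]].
      * rewrite Ei, ERi. specialize (P6 t0 (or_introl eq_refl)). simpl in P6.
        rewrite rabs_neg by lra. lra.
      * rewrite Eo by auto. specialize (Hol t Ht); simpl in Hol. rewrite ER by lia. apply P7; auto.
Qed.

Lemma inv_blue_push n r b i j st c o :
  input_ok n r b -> Inv n r b (mkA i j st c o) -> (j < n)%nat ->
  (i = n \/ b j < r i) -> (st = [] \/ c = true) ->
  Inv n r b (mkA i (S j) (j :: st) true o).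
Proof.
  intros Hok [Hi Hj Ho1 Ho2 Hl Hsb Hss Hol Hin Hbs Hnc Hnc2 Hphi] Hjn Hch Hst; simpl in *.
  assert (Mf : forall t, matched (mkA i (S j) (j :: st) true o) t <-> matched (mkA i j st c o) t).
  { intros t; unfold matched; simpl. destruct Hst as [ -> | -> ]; simpl; intuition discriminate. }
  assert (Hsti : forall u, In u st -> c = true /\ (u < j)%nat).
  { intros u Hu. destruct Hst as [ -> | -> ]; [destruct Hu|]. split; [auto| apply (Hsb u Hu)]. }
  assert (Hhi : forall t, matched (mkA i j st c o) t -> arc_hi r b o t < b j).
  { intros t Ht. pose proof (proj1 Ht) as Ht'; simpl in Ht'. apply arc_hi_lt; [apply Ho1; lia|].
    specialize (Hol t Ht). simpl in Hol. apply (sb_lt n r b); auto; lia. }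
  constructor; cbn [ai aj stk col out].
  - lia.
  - lia.
  - intros i' j' Hi' Hj'. apply Ho1; lia.
  - intros i' j' Hj' Hi'. destruct (Nat.eq_dec j' j); [subst|apply Ho2; lia].
    destruct Hch as [Hch|Hch]; [lia|]. eapply Rlt_le_trans; [apply Hch|]. apply (sr_le n r b); auto; lia.
  - destruct c; [cbn [length] in Hl |- *; lia|destruct Hst as [ -> |]; [cbn [length] in *; lia|discriminate]].
  - intros t [<-|Ht]; [lia|]. apply Hsti in Ht; lia.
  - constructor; auto. rewrite Forall_forall. intros u Hu. apply Hsti in Hu; lia.
  - intros t Ht%Mf. specialize (Hol t Ht); simpl in Hol; lia.
  - intros t1 t2 H1%Mf H2%Mf. apply Hin; auto.
  - intros _ t Ht%Mf [E|Hu]; [specialize (Hol t Ht); simpl in Hol; lia|].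
    destruct (Hsti _ Hu) as [-> _]. apply (Hbs eq_refl t Ht Hu).
  - intros t1 t2 H1%Mf H2%Mf. apply Hnc; auto.
  - intros t u Ht%Mf [<-|Hu] Hc; simpl in Hc.
    + specialize (Hhi t Ht). lra.
    + destruct (Hsti u Hu) as [Hc0 _]. subst c. apply (Hnc2 t u); auto.
  - destruct Hphi as (a & v & pR & pB & P1 & P2 & P3 & P4 & P5 & P6 & P7). cbn [ai aj stk col out] in P1, P2, P3, P4, P5, P6, P7.
    assert (Hai : a <= b j) by (apply P2; lia).
    remember (if c then v + (b j - a) else v - (b j - a)) as v' eqn:Hv'.
    assert (Hvv : - (b j - a) <= v' - v <= b j - a) by (destruct c; subst; lra).
    exists (b j), v', pR, (updr pB j v'). simpl.
    assert (ER : forall t, (t < j)%nat -> updr pB j v' t = pB t)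
      by (intros t Ht; unfold updr; destruct (Nat.eqb_spec t j); [lia|auto]).
    assert (ERi : updr pB j v' j = v') by (unfold updr; rewrite Nat.eqb_refl; auto).
    split; [|split; [|split; [|split; [|split; [|split]]]]].
    + intros i' Hi'. destruct Hch as [Hch|Hch]; [lia|].
      left. eapply Rlt_le_trans; [apply Hch|]. apply (sr_le n r b); auto; lia.
    + intros j' Hj'. apply (sb_le n r b); auto; lia.
    + intros i' Hi'. specialize (P3 i' Hi'). apply rabs_le_iff in P3. apply rabs_le_iff. lra.
    + intros j' Hj'. destruct (Nat.eq_dec j' j); [subst; rewrite ERi; apply rabs_le_iff; lra|].
      rewrite ER by lia. specialize (P4 j' ltac:(lia)). apply rabs_le_iff in P4. apply rabs_le_iff. lra.
    + intros i' j' Hi' Hj'. destruct (Nat.eq_dec j' j); [subst|rewrite ER by lia; apply P5; lia].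
      rewrite ERi. specialize (P3 i' Hi'). apply rabs_le_iff in P3. apply rabs_le_iff.
      assert (r i' < b j) by (apply Ho1; lia). rewrite rabs_neg by lra. lra.
    + intros u [<-|Hu]; [rewrite ERi; lra|].
      destruct (Hsti u Hu) as [Hc0 Hu']. subst c. rewrite ER by lia. specialize (P6 u Hu). simpl in P6. lra.
    + intros t Ht%Mf. specialize (Hol t Ht); simpl in Hol. rewrite ER by lia. apply P7; auto.
Qed.

Open Scope R_scope.

Lemma inv_init n r b : input_ok n r b -> Inv n r b ainit.
Proof.
  intros Hok. constructor; cbn [ai aj stk col out ainit].
  all: try (intros; unfold matched in *; simpl in *; lia).
  all: try (intros; simpl in *; tauto).
  all: try constructor.
  - exists (Rmin (r 0%nat) (b 0%nat)), 0, (fun _ => 0), (fun _ => 0). cbn [ai aj stk col out ainit].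
    repeat split; try (intros; unfold matched in *; simpl in *; lia); try (intros; simpl in *; tauto).
    + intros i' Hi'. eapply Rle_trans; [apply Rmin_l|]. apply (sr_le n r b); auto; lia.
    + intros j' Hj'. eapply Rle_trans; [apply Rmin_r|]. apply (sb_le n r b); auto; lia.
Qed.

Lemma astep_ij n r b s : Inv n r b s -> (ai s + aj s < n + n)%nat ->
  (ai (astep n r b s) + aj (astep n r b s) = S (ai s + aj s))%nat.
Proof.
  intros _ _. unfold astep. destruct (choose_red n r b s).
  - unfold red_step. destruct (stk s) as [|t l]; [|destruct (col s)]; simpl; lia.
  - unfold blue_step. destruct (stk s) as [|t l]; [|destruct (col s)]; simpl; lia.
Qed.

Lemma inv_step n r b s : input_ok n r b -> Inv n r b s -> (ai s + aj s < n + n)%nat ->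
  Inv n r b (astep n r b s).
Proof.
  intros Hok Hinv Hlt. destruct s as [i j st c o].
  pose proof (iv_i _ _ _ _ Hinv) as Hi. pose proof (iv_j _ _ _ _ Hinv) as Hj. simpl in *.
  assert (Hred : (i < n)%nat -> (j = n \/ r i < b j) -> Inv n r b (red_step (mkA i j st c o))).
  { intros H1 H2. unfold red_step; simpl. destruct st as [|t l]; [eapply inv_red_push; eauto|].
    destruct c; [apply inv_red_pop; auto| eapply inv_red_push; eauto]. }
  assert (Hblue : (j < n)%nat -> (i = n \/ b j < r i) -> Inv n r b (blue_step (mkA i j st c o))).
  { intros H1 H2. unfold blue_step; simpl. destruct st as [|t l]; [eapply inv_blue_push; eauto|].
    destruct c; [eapply inv_blue_push; eauto| apply inv_blue_pop; auto]. }
  unfold astep, choose_red; simpl.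
  destruct (Nat.ltb_spec i n).
  - destruct (Nat.eqb_spec j n); [apply Hred; auto|].
    destruct (Rlt_dec (r i) (b j)); [apply Hred; auto|].
    apply Hblue; [lia|right]. destruct Hok as [_ [_ Hd]]. specialize (Hd i j ltac:(lia) ltac:(lia)).
    destruct (Rtotal_order (r i) (b j)) as [?|[?|?]]; [contradiction|contradiction|lra].
  - apply Hblue; [lia|left; lia].
Qed.

Lemma aiter_inv n r b k s : input_ok n r b -> Inv n r b s -> (ai s + aj s + k <= n + n)%nat ->
  Inv n r b (aiter n r b k s) /\ (ai (aiter n r b k s) + aj (aiter n r b k s) = ai s + aj s + k)%nat.
Proof.
  intros Hok. revert s; induction k; intros s Hs Hk; simpl; [split; auto; lia|].
  assert (Hlt : (ai s + aj s < n + n)%nat) by lia.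
  pose proof (astep_ij n r b s Hs Hlt).
  destruct (IHk (astep n r b s)) as [H1 H2]; [apply inv_step; auto| lia | split; auto; lia].
Qed.

Lemma inv_final n r b s : input_ok n r b -> Inv n r b s -> ai s = n -> aj s = n ->
  is_min_nc_matching n r b (out s).
Proof.
  intros Hok [Hi Hj Ho1 Ho2 Hl Hsb Hss Hol Hin Hbs Hnc Hnc2 Hphi] Ei Ej.
  assert (Hst : stk s = []) by (destruct (stk s); auto; destruct (col s); simpl in Hl; lia).
  assert (M : forall t, (t < n)%nat -> matched s t) by (intros t Ht; split; [lia|rewrite Hst; simpl; tauto]).
  assert (Hbij : is_bichromatic_perfect_matching n (out s)).
  { split; [intros; rewrite <- Ej; apply Hol, M; auto|intros; apply Hin; auto]. }
  split; [split; [auto|]|].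
  - intros t1 t2 H1 H2 Hne. apply Hnc; auto.
  - intros g [[Hgr Hgi] _].
    destruct Hphi as (a & v & pR & pB & P1 & P2 & P3 & P4 & P5 & P6 & P7).
    unfold weight.
    rewrite (sumR_ext n _ (fun i => pR i - pB (out s i))) by (intros; symmetry; apply P7, M; auto).
    rewrite sumR_minus, (sumR_perm n pB (out s)) by (destruct Hbij; auto).
    apply Rle_trans with (sumR n (fun i => pR i - pB (g i))).
    + rewrite sumR_minus, (sumR_perm n pB g) by auto. lra.
    + apply sumR_le. intros i Hi'. specialize (P5 i (g i) ltac:(lia) ltac:(specialize (Hgr i Hi'); lia)).
      apply rabs_le_iff in P5. lra.
Qed.

Theorem alg_correct n r b : input_ok n r b ->
  is_min_nc_matching n r b (out (aiter n r b (n + n) ainit)).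
Proof.
  intros Hok. destruct (aiter_inv n r b (n + n) ainit Hok (inv_init n r b Hok)) as [H1 H2]; [simpl; lia|].
  pose proof (iv_i _ _ _ _ H1). pose proof (iv_j _ _ _ _ H1). simpl in H2.
  apply inv_final; auto; lia.
Qed.

Open Scope Z_scope.
Definition prog : list instr := [
  (* 0 *) ZConst 1 1;
  (* 1 *) ZConst 2 0;
  (* 2 *) ZConst 3 0;
  (* 3 *) ZAdd 4 0 0;
  (* 4 *) ZAdd 8 4 2;
  (* 5 *) JZEq 3 4 11;
  (* 6 *) RLoadInd 0 3;
  (* 7 *) RStoreInd 8 0;
  (* 8 *) ZAdd 3 3 1;
  (* 9 *) ZAdd 8 8 1;
  (* 10 *) Jmp 5;
  (* 11 *) ZConst 3 0;
  (* 12 *) ZConst 4 0;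
  (* 13 *) ZConst 10 27;
  (* 14 *) ZAdd 6 0 10;
  (* 15 *) ZAdd 5 6 2;
  (* 16 *) ZConst 7 0;
  (* 17 *) ZAdd 8 0 0;
  (* 18 *) ZAdd 9 8 0;
  (* 19 *) ZConst 10 14;
  (* 20 *) ZAdd 12 0 10;
  (* 21 *) ZConst 13 13;
  (* 22 *) JZEq 3 0 28;
  (* 23 *) JZEq 4 0 51;
  (* 24 *) RLoadInd 0 8;
  (* 25 *) RLoadInd 1 9;
  (* 26 *) JRLt 0 1 51;
  (* 27 *) Jmp 29;
  (* 28 *) JZEq 4 0 72;
  (* 29 *) JZEq 5 6 43;
  (* 30 *) JZEq 7 2 32;
  (* 31 *) Jmp 43;
  (* 32 *) ZSub 5 5 1;
  (* 33 *) ZLoadInd 10 5;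
  (* 34 *) JZLt 10 13 37;
  (* 35 *) ZAdd 11 10 1;
  (* 36 *) Jmp 38;
  (* 37 *) ZAdd 11 10 12;
  (* 38 *) ZAdd 10 4 2;
  (* 39 *) ZAdd 4 4 1;
  (* 40 *) ZAdd 9 9 1;
  (* 41 *) ZStoreInd 11 10;
  (* 42 *) Jmp 22;
  (* 43 *) ZAdd 11 5 2;
  (* 44 *) ZAdd 10 4 2;
  (* 45 *) ZAdd 5 5 1;
  (* 46 *) ZConst 7 1;
  (* 47 *) ZAdd 4 4 1;
  (* 48 *) ZAdd 9 9 1;
  (* 49 *) ZStoreInd 11 10;
  (* 50 *) Jmp 22;
  (* 51 *) JZEq 5 6 64;
  (* 52 *) JZEq 7 1 54;
  (* 53 *) Jmp 64;
  (* 54 *) ZSub 5 5 1;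
  (* 55 *) ZLoadInd 10 5;
  (* 56 *) JZLt 3 13 59;
  (* 57 *) ZAdd 11 3 1;
  (* 58 *) Jmp 60;
  (* 59 *) ZAdd 11 3 12;
  (* 60 *) ZAdd 3 3 1;
  (* 61 *) ZAdd 8 8 1;
  (* 62 *) ZStoreInd 11 10;
  (* 63 *) Jmp 22;
  (* 64 *) ZAdd 11 5 2;
  (* 65 *) ZAdd 10 3 2;
  (* 66 *) ZAdd 5 5 1;
  (* 67 *) ZConst 7 0;
  (* 68 *) ZAdd 3 3 1;
  (* 69 *) ZAdd 8 8 1;
  (* 70 *) ZStoreInd 11 10;
  (* 71 *) Jmp 22;
  (* 72 *) ZConst 10 12;
  (* 73 *) ZAdd 0 12 10;
  (* 74 *) ZLoadInd 13 0;
  (* 75 *) ZSub 0 0 1;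
  (* 76 *) ZLoadInd 12 0;
  (* 77 *) ZSub 0 0 1;
  (* 78 *) ZLoadInd 11 0;
  (* 79 *) ZSub 0 0 1;
  (* 80 *) ZLoadInd 10 0;
  (* 81 *) ZSub 0 0 1;
  (* 82 *) ZLoadInd 9 0;
  (* 83 *) ZSub 0 0 1;
  (* 84 *) ZLoadInd 8 0;
  (* 85 *) ZSub 0 0 1;
  (* 86 *) ZLoadInd 7 0;
  (* 87 *) ZSub 0 0 1;
  (* 88 *) ZLoadInd 6 0;
  (* 89 *) ZSub 0 0 1;
  (* 90 *) ZLoadInd 5 0;
  (* 91 *) ZSub 0 0 1;
  (* 92 *) ZLoadInd 4 0;
  (* 93 *) ZSub 0 0 1;
  (* 94 *) ZLoadInd 3 0;
  (* 95 *) ZSub 0 0 1;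
  (* 96 *) ZLoadInd 2 0;
  (* 97 *) ZSub 0 0 1;
  (* 98 *) ZLoadInd 1 0;
  (* 99 *) Halt ].

Open Scope nat_scope.

Fixpoint runk (k : nat) (s : state) : option state :=
  match k with O => Some s | S k' => match step prog s with Some s' => runk k' s' | None => None end end.

Lemma runk_add k1 k2 s s1 s2 : runk k1 s = Some s1 -> runk k2 s1 = Some s2 -> runk (k1 + k2) s = Some s2.
Proof.
  revert s; induction k1; simpl; intros s H1 H2; [congruence|].
  destruct (step prog s); [eauto|discriminate].
Qed.

Lemma exec_runk k f s s' : runk k s = Some s' -> step prog s' = None -> k <= f -> exec prog f s = Some s'.
Proof.
  revert s f; induction k; simpl; intros s f H1 H2 Hk.
  - inversion H1; subst. destruct f; simpl; rewrite H2; auto.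
  - destruct (step prog s) eqn:E; [|discriminate]. destruct f; [lia|]. simpl. rewrite E. apply IHk; auto; lia.
Qed.

Definition inp (n : nat) (r b : nat -> R) (a : nat) : R :=
  if Nat.ltb a n then r a else if Nat.ltb a (n + n) then b (a - n) else 0%R.

Ltac fix_bool :=
  repeat match goal with
  | |- context [Nat.eqb ?a ?b] =>
      first [ replace (Nat.eqb a b) with false by (symmetry; apply Nat.eqb_neq; lia)
            | replace (Nat.eqb a b) with true by (symmetry; apply Nat.eqb_eq; lia) ]
  | |- context [Nat.ltb ?a ?b] =>
      first [ replace (Nat.ltb a b) with false by (symmetry; apply Nat.ltb_ge; lia)
            | replace (Nat.ltb a b) with true by (symmetry; apply Nat.ltb_lt; lia) ]
  | |- context [Z.eqb ?a ?b] =>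
      first [ replace (Z.eqb a b) with false by (symmetry; apply Z.eqb_neq; lia)
            | replace (Z.eqb a b) with true by (symmetry; apply Z.eqb_eq; lia) ]
  | |- context [Z.ltb ?a ?b] =>
      first [ replace (Z.ltb a b) with false by (symmetry; apply Z.ltb_ge; lia)
            | replace (Z.ltb a b) with true by (symmetry; apply Z.ltb_lt; lia) ]
  | |- context [Z.to_nat (Z.of_nat ?a)] => rewrite (Nat2Z.id a)
  end.

Record CRep n (r b : nat -> R) (k : nat) (z : nat -> Z) (m : nat -> R) : Prop := {
  cz0 : z 0 = Z.of_nat n; cz1 : z 1 = 1%Z; cz2 : z 2 = 0%Z; cz3 : z 3 = Z.of_nat k;
  cz4 : z 4 = Z.of_nat (n + n); cz8 : z 8 = Z.of_nat (n + n + k); ck : k <= n + n;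
  cdone : forall a, a < k -> m (n + n + a) = inp n r b a;
  cto : forall a, k <= a < n + n -> m a = inp n r b a }.

Ltac cregs HM := repeat first [ rewrite (cz0 _ _ _ _ _ _ HM) | rewrite (cz1 _ _ _ _ _ _ HM)
  | rewrite (cz2 _ _ _ _ _ _ HM) | rewrite (cz3 _ _ _ _ _ _ HM) | rewrite (cz4 _ _ _ _ _ _ HM)
  | rewrite (cz8 _ _ _ _ _ _ HM) ].

Lemma copy_iter n r b k z m : CRep n r b k z m -> k < n + n ->
  exists z' m', runk 6 (mkState 5 z m) = Some (mkState 5 z' m') /\ CRep n r b (S k) z' m'.
Proof.
  intros HM Hk.
  do 2 eexists. split.
  { cbn. cregs HM. fix_bool. cbn. reflexivity. }
  constructor; cbn; cregs HM; fix_bool; try lia.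
  - intros a Ha. unfold upd. destruct (Nat.eq_dec a k).
    + subst. fix_bool. apply (cto _ _ _ _ _ _ HM); lia.
    + fix_bool. apply (cdone _ _ _ _ _ _ HM); lia.
  - intros a Ha. unfold upd. fix_bool. apply (cto _ _ _ _ _ _ HM); lia.
Qed.

Lemma copy_loop n r b : forall d k z m, d = n + n - k -> CRep n r b k z m ->
  exists z' m', runk (6 * d + 1) (mkState 5 z m) = Some (mkState 11 z' m') /\ CRep n r b (n + n) z' m'.
Proof.
  induction d; intros k z m Hd HM.
  - pose proof (ck _ _ _ _ _ _ HM). assert (k = n + n) by lia. subst k.
    exists z, m. split; auto. cbn. cregs HM. fix_bool. reflexivity.
  - pose proof (ck _ _ _ _ _ _ HM).
    destruct (copy_iter n r b k z m HM ltac:(lia)) as (z1 & m1 & H1 & H2).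
    destruct (IHd (S k) z1 m1 ltac:(lia) H2) as (z' & m' & H3 & H4).
    exists z', m'. split; auto. replace (6 * S d + 1) with (6 + (6 * d + 1)) by lia.
    eapply runk_add; eauto.
Qed.

Open Scope nat_scope.

Definition addr (n t : nat) : nat := if Nat.ltb t 13 then n + 14 + t else S t.

Record MRep n (r b : nat -> R) (s : ast) (z : nat -> Z) (m : nat -> R) : Prop := {
  mz0 : z 0 = Z.of_nat n; mz1 : z 1 = 1%Z; mz2 : z 2 = 0%Z;
  mz3 : z 3 = Z.of_nat (ai s); mz4 : z 4 = Z.of_nat (aj s);
  mz5 : z 5 = Z.of_nat (n + 27 + length (stk s)); mz6 : z 6 = Z.of_nat (n + 27);
  mz7 : z 7 = (if col s then 1 else 0)%Z;
  mz8 : z 8 = Z.of_nat (n + n + ai s); mz9 : z 9 = Z.of_nat (n + n + n + aj s);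
  mz12 : z 12 = Z.of_nat (n + 14); mz13 : z 13 = 13%Z;
  mstk : forall d, d < length (stk s) -> z (n + 27 + d) = Z.of_nat (nth d (rev (stk s)) 0);
  mout : forall t, matched s t -> z (addr n t) = Z.of_nat (out s t);
  mreal : forall a, a < n + n -> m (n + n + a) = inp n r b a }.

Ltac mregs HM := repeat first [ rewrite (mz0 _ _ _ _ _ _ HM) | rewrite (mz1 _ _ _ _ _ _ HM)
  | rewrite (mz2 _ _ _ _ _ _ HM) | rewrite (mz3 _ _ _ _ _ _ HM) | rewrite (mz4 _ _ _ _ _ _ HM)
  | rewrite (mz5 _ _ _ _ _ _ HM) | rewrite (mz6 _ _ _ _ _ _ HM) | rewrite (mz7 _ _ _ _ _ _ HM)
  | rewrite (mz8 _ _ _ _ _ _ HM) | rewrite (mz9 _ _ _ _ _ _ HM) | rewrite (mz12 _ _ _ _ _ _ HM)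
  | rewrite (mz13 _ _ _ _ _ _ HM) ].

Lemma start n r b : exists z m, runk 5 (init_state n r b) = Some (mkState 5 z m) /\ CRep n r b 0 z m.
Proof.
  do 2 eexists. split; [cbn; reflexivity|].
  constructor; cbn; fix_bool; try lia.
  - intros a Ha. unfold inp. reflexivity.
Qed.

Lemma setup n r b z m : CRep n r b (n + n) z m ->
  exists z' m', runk 11 (mkState 11 z m) = Some (mkState 22 z' m') /\ MRep n r b ainit z' m'.
Proof.
  intros HM. do 2 eexists. split; [cbn; reflexivity|].
  constructor; cbn; cregs HM; fix_bool; try lia.
  - intros t [Ht _]; simpl in Ht; lia.
  - intros a Ha. apply (cdone _ _ _ _ _ _ HM); lia.
Qed.

Ltac norm HM := mregs HM; cbn [length stk ai aj col out]; fix_bool.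
Ltac run HM := cbn; norm HM; repeat (progress (cbn; norm HM)).

Open Scope nat_scope.

Lemma addr_ge n t : 14 <= addr n t \/ n = 0.
Proof. unfold addr. destruct (Nat.ltb_spec t 13); lia. Qed.

Lemma nth_rev_cons_last (l : list nat) x : nth (length l) (rev (x :: l)) 0 = x.
Proof. simpl. rewrite app_nth2; rewrite length_rev; [|lia]. rewrite Nat.sub_diag; auto. Qed.
Lemma nth_rev_cons_lt (l : list nat) x d : d < length l -> nth d (rev (x :: l)) 0 = nth d (rev l) 0.
Proof. intros; simpl. rewrite app_nth1; auto. rewrite length_rev; auto. Qed.

Lemma addr_bounds n t : t < n -> 14 <= addr n t <= n + 26.
Proof. unfold addr. destruct (Nat.ltb_spec t 13); lia. Qed.

Ltac rd HM := unfold upd; fix_bool; mregs HM; cbn [length stk ai aj col out]; fix_bool.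

Lemma red_push_sim n r b i j st c o z m :
  Inv n r b (mkA i j st c o) -> MRep n r b (mkA i j st c o) z m -> i < n -> (st = [] \/ c = false) ->
  exists k z' m', k <= 12 /\ runk k (mkState 51 z m) = Some (mkState 22 z' m') /\
    MRep n r b (mkA (S i) j (i :: st) false o) z' m'.
Proof.
  intros HI HM Hi Hst.
  assert (Mf : forall t, matched (mkA (S i) j (i :: st) false o) t -> matched (mkA i j st c o) t /\ t < i).
  { intros t [H1 H2]; simpl in *. assert (t <> i) by (intro; subst; apply H2; auto).
    split; [|lia]. split; simpl; [lia|]. intros [_ H3]; apply H2; auto. }
  assert (Hlen : length st <= n) by (pose proof (iv_len _ _ _ _ HI); pose proof (iv_i _ _ _ _ HI);
     pose proof (iv_j _ _ _ _ HI); simpl in *; destruct c; lia).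
  destruct st as [|t0 rest]; [exists 9|destruct c; [destruct Hst; discriminate|exists 11]];
  do 2 eexists; (split; [lia|split; [run HM; reflexivity|]]);
  (constructor; cbn [ai aj stk col out length];
   [ rd HM; lia .. | | | apply (mreal _ _ _ _ _ _ HM) ]).
  - intros d Hd. assert (d = 0) by lia. subst d. rd HM. simpl. lia.
  - intros t Ht. destruct (Mf t Ht) as [Ht' Hti]. pose proof (addr_bounds n t ltac:(lia)).
    rd HM. apply (mout _ _ _ _ _ _ HM); auto.
  - intros d Hd. simpl in Hlen. destruct (Nat.eq_dec d (S (length rest))) as [ -> |Hne].
    + rd HM. change (S (length rest)) with (length (t0 :: rest)). rewrite nth_rev_cons_last. lia.
    + rd HM. rewrite nth_rev_cons_lt by (simpl; lia). apply (mstk _ _ _ _ _ _ HM). simpl; lia.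
  - intros t Ht. destruct (Mf t Ht) as [Ht' Hti]. pose proof (addr_bounds n t ltac:(lia)).
    rd HM. apply (mout _ _ _ _ _ _ HM); auto.
Qed.

Lemma addr_diff n t1 t2 : t1 < n -> t2 < n -> t1 <> t2 -> addr n t1 <> addr n t2.
Proof. unfold addr. destruct (Nat.ltb_spec t1 13); destruct (Nat.ltb_spec t2 13); lia. Qed.
Lemma addr_small n i : i < 13 -> Z.to_nat (Z.of_nat i + Z.of_nat (n + 14)) = addr n i.
Proof. unfold addr. intros H. destruct (Nat.ltb_spec i 13); lia. Qed.
Lemma addr_large n i : 13 <= i -> Z.to_nat (Z.of_nat i + 1) = addr n i.
Proof. unfold addr. intros H. destruct (Nat.ltb_spec i 13); lia. Qed.

Lemma red_pop_sim n r b i j t0 rest o z m :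
  Inv n r b (mkA i j (t0 :: rest) true o) -> MRep n r b (mkA i j (t0 :: rest) true o) z m -> i < n ->
  exists k z' m', k <= 12 /\ runk k (mkState 51 z m) = Some (mkState 22 z' m') /\
    MRep n r b (mkA (S i) j rest true (updn o i t0)) z' m'.
Proof.
  intros HI HM Hi.
  assert (Hlen : S (length rest) <= n) by (pose proof (iv_len _ _ _ _ HI); pose proof (iv_i _ _ _ _ HI);
     pose proof (iv_j _ _ _ _ HI); simpl in *; lia).
  assert (Mo : forall t, matched (mkA i j (t0 :: rest) true o) t <-> t < i)
    by (intros; unfold matched; simpl; split; [tauto|intuition discriminate]).
  assert (Mn : forall t, matched (mkA (S i) j rest true (updn o i t0)) t <-> t < S i)
    by (intros; unfold matched; simpl; split; [tauto|intuition discriminate]).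
  assert (HT : upd z 5 (Z.of_nat (n + 27 + S (length rest)) - 1)%Z
                  (Z.to_nat (Z.of_nat (n + 27 + S (length rest)) - 1)) = Z.of_nat t0).
  { replace (Z.to_nat (Z.of_nat (n + 27 + S (length rest)) - 1)) with (n + 27 + length rest) by lia.
    unfold upd; fix_bool. rewrite (mstk _ _ _ _ _ _ HM) by (simpl; lia). cbn [stk].
    change (length rest) with (length rest). rewrite nth_rev_cons_last. reflexivity. }
  destruct (Nat.lt_ge_cases i 13) as [H13|H13]; [exists 10|exists 11];
  do 2 eexists; (split; [lia|split; [run HM; reflexivity|]]);
  rewrite ?HT; rewrite ?(addr_small n i H13), ?(addr_large n i H13);
  pose proof (addr_bounds n i Hi);
  (constructor; cbn [ai aj stk col out length];
   [ rd HM; lia .. | | | apply (mreal _ _ _ _ _ _ HM) ]).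
  all: try (intros d Hd; rd HM; rewrite (mstk _ _ _ _ _ _ HM) by (simpl; lia); cbn [stk];
             rewrite nth_rev_cons_lt by lia; reflexivity).
  all: intros t Ht%Mn; unfold updn; destruct (Nat.eq_dec t i) as [ -> |Hne];
       [ rd HM; reflexivity
       | pose proof (addr_diff n t i ltac:(lia) Hi Hne); pose proof (addr_bounds n t ltac:(lia));
         rd HM; apply (mout _ _ _ _ _ _ HM), Mo; lia ].
Qed.

Lemma blue_push_sim n r b i j st c o z m :
  Inv n r b (mkA i j st c o) -> MRep n r b (mkA i j st c o) z m -> j < n -> (st = [] \/ c = true) ->
  exists k z' m', k <= 12 /\ runk k (mkState 29 z m) = Some (mkState 22 z' m') /\
    MRep n r b (mkA i (S j) (j :: st) true o) z' m'.
Proof.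
  intros HI HM Hj Hst.
  assert (Mf : forall t, matched (mkA i (S j) (j :: st) true o) t -> matched (mkA i j st c o) t).
  { intros t; unfold matched; simpl. destruct Hst as [ -> | -> ]; simpl; intuition discriminate. }
  assert (Hlen : length st <= n) by (pose proof (iv_len _ _ _ _ HI); pose proof (iv_i _ _ _ _ HI);
     pose proof (iv_j _ _ _ _ HI); simpl in *; destruct c; lia).
  assert (Hlt : forall t, matched (mkA i j st c o) t -> t < n)
    by (intros t [Ht _]; pose proof (iv_i _ _ _ _ HI); simpl in *; lia).
  destruct st as [|t0 rest]; [exists 9|destruct c; [exists 11|destruct Hst; discriminate]];
  do 2 eexists; (split; [lia|split; [run HM; reflexivity|]]);
  (constructor; cbn [ai aj stk col out length];
   [ rd HM; lia .. | | | apply (mreal _ _ _ _ _ _ HM) ]).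
  - intros d Hd. assert (d = 0) by lia. subst d. rd HM. simpl. lia.
  - intros t Ht%Mf. pose proof (addr_bounds n t (Hlt t Ht)).
    rd HM. apply (mout _ _ _ _ _ _ HM); auto.
  - intros d Hd. simpl in Hlen. destruct (Nat.eq_dec d (S (length rest))) as [ -> |Hne].
    + rd HM. change (S (length rest)) with (length (t0 :: rest)). rewrite nth_rev_cons_last. lia.
    + rd HM. rewrite nth_rev_cons_lt by (simpl; lia). apply (mstk _ _ _ _ _ _ HM). simpl; lia.
  - intros t Ht%Mf. pose proof (addr_bounds n t (Hlt t Ht)).
    rd HM. apply (mout _ _ _ _ _ _ HM); auto.
Qed.

Lemma blue_pop_sim n r b i j t0 rest o z m :
  Inv n r b (mkA i j (t0 :: rest) false o) -> MRep n r b (mkA i j (t0 :: rest) false o) z m -> j < n ->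
  exists k z' m', k <= 12 /\ runk k (mkState 29 z m) = Some (mkState 22 z' m') /\
    MRep n r b (mkA i (S j) rest false (updn o t0 j)) z' m'.
Proof.
  intros HI HM Hj.
  assert (Hlen : S (length rest) <= n) by (pose proof (iv_len _ _ _ _ HI); pose proof (iv_i _ _ _ _ HI);
     pose proof (iv_j _ _ _ _ HI); simpl in *; lia).
  assert (Ht0 : t0 < n) by (pose proof (iv_stkb _ _ _ _ HI t0 (or_introl eq_refl)); pose proof (iv_i _ _ _ _ HI); simpl in *; lia).
  assert (Mn : forall t, matched (mkA i (S j) rest false (updn o t0 j)) t ->
     t = t0 \/ (matched (mkA i j (t0 :: rest) false o) t /\ t <> t0)).
  { intros t [H1 H2]; simpl in *. destruct (Nat.eq_dec t t0); [left; auto|right].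
    split; auto. split; simpl; auto. intros [_ [H3|H3]]; [congruence|]. apply H2; auto. }
  assert (Hlt : forall t, matched (mkA i j (t0 :: rest) false o) t -> t < n)
    by (intros t [Ht _]; pose proof (iv_i _ _ _ _ HI); simpl in *; lia).
  assert (HT : upd z 5 (Z.of_nat (n + 27 + S (length rest)) - 1)%Z
                  (Z.to_nat (Z.of_nat (n + 27 + S (length rest)) - 1)) = Z.of_nat t0).
  { replace (Z.to_nat (Z.of_nat (n + 27 + S (length rest)) - 1)) with (n + 27 + length rest) by lia.
    unfold upd; fix_bool. rewrite (mstk _ _ _ _ _ _ HM) by (simpl; lia). cbn [stk].
    rewrite nth_rev_cons_last. reflexivity. }
  destruct (Nat.lt_ge_cases t0 13) as [H13|H13]; [exists 11|exists 12];
  do 2 eexists; (split; [lia|split; [run HM; rewrite HT; run HM; reflexivity|]]);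
  rewrite ?(addr_small n t0 H13), ?(addr_large n t0 H13);
  pose proof (addr_bounds n t0 Ht0);
  (constructor; cbn [ai aj stk col out length];
   [ rd HM; lia .. | | | apply (mreal _ _ _ _ _ _ HM) ]).
  all: try (intros d Hd; rd HM; rewrite (mstk _ _ _ _ _ _ HM) by (simpl; lia); cbn [stk];
             rewrite nth_rev_cons_lt by lia; reflexivity).
  all: intros t Ht%Mn; unfold updn; destruct Ht as [ -> |[Ht Hne]];
       [ rd HM; lia
       | pose proof (addr_diff n t t0 (Hlt t Ht) Ht0 Hne); pose proof (addr_bounds n t (Hlt t Ht));
         rd HM; apply (mout _ _ _ _ _ _ HM); auto ].
Qed.

Open Scope nat_scope.

Lemma MRep_m n r b s z m m' : MRep n r b s z m -> (forall a, a < n + n -> m' (n + n + a) = m (n + n + a)) ->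
  MRep n r b s z m'.
Proof. intros [] H; constructor; auto. intros a Ha; rewrite H; auto. Qed.

Lemma disp n r b i j st c o z m :
  Inv n r b (mkA i j st c o) -> MRep n r b (mkA i j st c o) z m -> i + j < n + n ->
  exists k m', k <= 6 /\
    (if choose_red n r b (mkA i j st c o)
     then runk k (mkState 22 z m) = Some (mkState 51 z m')
     else runk k (mkState 22 z m) = Some (mkState 29 z m')) /\ MRep n r b (mkA i j st c o) z m'.
Proof.
  intros HI HM Hij. pose proof (iv_i _ _ _ _ HI) as Hi. pose proof (iv_j _ _ _ _ HI) as Hj. simpl in Hi, Hj.
  unfold choose_red; cbn [ai aj].
  destruct (Nat.ltb_spec i n).
  - destruct (Nat.eqb_spec j n).
    + exists 2, m. split; [lia|split; [run HM; reflexivity|auto]].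
    + assert (Hri : m (n + n + i) = r i).
      { rewrite (mreal _ _ _ _ _ _ HM) by lia. unfold inp. fix_bool. reflexivity. }
      assert (Hbj : m (n + n + n + j) = b j).
      { replace (n + n + n + j) with (n + n + (n + j)) by lia.
        rewrite (mreal _ _ _ _ _ _ HM) by lia. unfold inp. fix_bool. f_equal; lia. }
      destruct (Rlt_dec (r i) (b j)).
      * exists 5; eexists. split; [lia|split].
        -- run HM. replace (upd m 0 (m (n + n + i)) (n + n + n + j)) with (b j) by (unfold upd; fix_bool; auto). rewrite Hri. destruct (Rlt_dec (r i) (b j)); [|contradiction]. run HM. reflexivity.
        -- eapply MRep_m; [apply HM|]. intros a Ha. unfold upd. fix_bool. reflexivity.
      * exists 6; eexists. split; [lia|split].
        -- run HM. replace (upd m 0 (m (n + n + i)) (n + n + n + j)) with (b j) by (unfold upd; fix_bool; auto). rewrite Hri. destruct (Rlt_dec (r i) (b j)); [contradiction|]. run HM. reflexivity.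
        -- eapply MRep_m; [apply HM|]. intros a Ha. unfold upd. fix_bool. reflexivity.
  - exists 2, m. split; [lia|split; [run HM; reflexivity|auto]].
Qed.

Lemma main_step n r b s z m : input_ok n r b ->
  Inv n r b s -> MRep n r b s z m -> ai s + aj s < n + n ->
  exists k z' m', k <= 20 /\ runk k (mkState 22 z m) = Some (mkState 22 z' m') /\
    MRep n r b (astep n r b s) z' m'.
Proof.
  intros Hok HI HM Hij. destruct s as [i j st c o]. simpl in Hij.
  pose proof (iv_i _ _ _ _ HI) as Hi. pose proof (iv_j _ _ _ _ HI) as Hj. simpl in Hi, Hj.
  destruct (disp n r b i j st c o z m HI HM Hij) as (k1 & m1 & Hk1 & Hrun & HM1).
  unfold astep. destruct (choose_red n r b (mkA i j st c o)) eqn:Ech.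
  - assert (Hin : i < n) by (unfold choose_red in Ech; simpl in Ech; destruct (Nat.ltb_spec i n); [lia|discriminate]).
    unfold red_step; cbn [stk col ai aj out].
    assert (H : exists k z' m', k <= 12 /\ runk k (mkState 51 z m1) = Some (mkState 22 z' m') /\
      MRep n r b (match st, c with
        | t :: rest, true => mkA (S i) j rest true (updn o i t)
        | _, _ => mkA (S i) j (i :: st) false o end) z' m').
    { destruct st as [|t rest]; [|destruct c].
      - apply (red_push_sim n r b i j [] c o z m1); auto.
      - apply (red_pop_sim n r b i j t rest o z m1); auto.
      - apply (red_push_sim n r b i j (t :: rest) false o z m1); auto. }
    destruct H as (k2 & z' & m' & Hk2 & Hr2 & HM2).
    exists (k1 + k2), z', m'. split; [lia|split; [eapply runk_add; eauto|auto]].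
  - assert (Hjn : j < n).
    { unfold choose_red in Ech; simpl in Ech. destruct (Nat.ltb_spec i n); [|lia].
      destruct (Nat.eqb_spec j n); [discriminate|lia]. }
    unfold blue_step; cbn [stk col ai aj out].
    assert (H : exists k z' m', k <= 12 /\ runk k (mkState 29 z m1) = Some (mkState 22 z' m') /\
      MRep n r b (match st, c with
        | t :: rest, false => mkA i (S j) rest false (updn o t j)
        | _, _ => mkA i (S j) (j :: st) true o end) z' m').
    { destruct st as [|t rest]; [|destruct c].
      - apply (blue_push_sim n r b i j [] c o z m1); auto.
      - apply (blue_push_sim n r b i j (t :: rest) true o z m1); auto.
      - apply (blue_pop_sim n r b i j t rest o z m1); auto. }
    destruct H as (k2 & z' & m' & Hk2 & Hr2 & HM2).
    exists (k1 + k2), z', m'. split; [lia|split; [eapply runk_add; eauto|auto]].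
Qed.

Lemma main_loop n r b : input_ok n r b -> forall k s z m,
  Inv n r b s -> MRep n r b s z m -> ai s + aj s + k = n + n ->
  exists k' z' m', k' <= 20 * k /\ runk k' (mkState 22 z m) = Some (mkState 22 z' m') /\
    MRep n r b (aiter n r b k s) z' m'.
Proof.
  intros Hok; induction k; intros s z m HI HM Hk.
  - exists 0, z, m. split; [lia|split; [reflexivity|auto]].
  - destruct (main_step n r b s z m Hok HI HM ltac:(lia)) as (k1 & z1 & m1 & Hk1 & Hr1 & HM1).
    pose proof (astep_ij n r b s HI ltac:(lia)).
    destruct (IHk (astep n r b s) z1 m1 (inv_step n r b s Hok HI ltac:(lia)) HM1 ltac:(lia))
      as (k2 & z2 & m2 & Hk2 & Hr2 & HM2).
    exists (k1 + k2), z2, m2. split; [lia|split; [eapply runk_add; eauto|auto]].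
Qed.

Open Scope nat_scope.

Record FInv n (z : nat -> Z) (t : nat) (zc : nat -> Z) : Prop := {
  f0 : zc 0 = Z.of_nat (n + 13 + t);
  f1 : 1 <= t -> zc 1 = 1%Z;
  fhi : forall a, n + 14 <= a -> zc a = z a;
  fout : forall u, 13 <= u -> zc (S u) = z (S u);
  fdone : forall u, t <= u < 13 -> zc (S u) = z (n + 14 + u) }.

Lemma prog_ld t : 2 <= t <= 13 ->
  nth_error prog (74 + 2 * (13 - t)) = Some (ZLoadInd t 0) /\
  nth_error prog (75 + 2 * (13 - t)) = Some (ZSub 0 0 1).
Proof. intros H. do 14 (destruct t as [|t]; [ (exfalso; lia) || (split; reflexivity) |]). lia. Qed.

Lemma block n z t zc m : 2 <= t <= 13 -> FInv n z t zc ->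
  exists zc', runk 2 (mkState (74 + 2 * (13 - t)) zc m) = Some (mkState (74 + 2 * (13 - (t - 1))) zc' m)
    /\ FInv n z (t - 1) zc'.
Proof.
  intros Ht HF. destruct (prog_ld t Ht) as [E1 E2]. eexists. split.
  - unfold runk, step. cbn [pc zm rm]. rewrite E1. cbn [pc zm rm].
    replace (S (74 + 2 * (13 - t))) with (75 + 2 * (13 - t)) by lia. rewrite E2.
    replace (S (75 + 2 * (13 - t))) with (74 + 2 * (13 - (t - 1))) by lia. reflexivity.
  - pose proof (f0 _ _ _ _ HF) as H0. pose proof (f1 _ _ _ _ HF ltac:(lia)) as H1.
    assert (HL : zc (Z.to_nat (zc 0)) = z (n + 13 + t)) by (rewrite H0, Nat2Z.id; apply (fhi _ _ _ _ HF); lia).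
    constructor.
    + unfold upd. fix_bool. rewrite H0, H1. lia.
    + intros _. unfold upd. fix_bool. auto.
    + intros a Ha. unfold upd. fix_bool. apply (fhi _ _ _ _ HF); lia.
    + intros u Hu. unfold upd. fix_bool. apply (fout _ _ _ _ HF); lia.
    + intros u Hu. unfold upd. fix_bool. destruct (Nat.eq_dec (S u) t) as [E|E].
      * fix_bool. rewrite HL. f_equal; lia.
      * fix_bool. apply (fdone _ _ _ _ HF); lia.
Qed.

Lemma blocks n z m : forall d t zc, t = S (S d) -> t <= 13 -> FInv n z t zc ->
  exists zc', runk (2 * S d) (mkState (74 + 2 * (13 - t)) zc m) = Some (mkState 98 zc' m)
    /\ FInv n z 1 zc'.
Proof.
  induction d; intros t zc Et Ht HF.
  - subst t. destruct (block n z 2 zc m ltac:(lia) HF) as (zc' & H1 & H2).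
    exists zc'. split; [exact H1|exact H2].
  - destruct (block n z t zc m ltac:(lia) HF) as (zc1 & H1 & H2).
    destruct (IHd (t - 1) zc1 ltac:(lia) ltac:(lia) H2) as (zc' & H3 & H4).
    exists zc'. split; [|auto]. replace (2 * S (S d)) with (2 + 2 * S d) by lia.
    eapply runk_add; eauto.
Qed.

Lemma final_sim n r b c o z m :
  MRep n r b (mkA n n [] c o) z m ->
  (forall t, t < n -> matched (mkA n n [] c o) t) ->
  exists s', runk 29 (mkState 22 z m) = Some s' /\ step prog s' = None /\
    forall t, t < n -> zm s' (S t) = Z.of_nat (o t).
Proof.
  intros HM HMt.
  assert (E1 : exists zc, runk 4 (mkState 22 z m) = Some (mkState 74 zc m) /\ FInv n z 13 zc).
  { eexists. split; [run HM; reflexivity|].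
    constructor.
    - unfold upd; fix_bool. mregs HM. lia.
    - intros _. unfold upd; fix_bool. mregs HM. auto.
    - intros a Ha. unfold upd; fix_bool. auto.
    - intros u Hu. unfold upd; fix_bool. auto.
    - intros; lia. }
  destruct E1 as (zc & H1 & HF).
  destruct (blocks n z m 11 13 zc eq_refl ltac:(lia) HF) as (zc' & H2 & HF').
  set (zf := upd zc' 1 (zc' (Z.to_nat (zc' 0)))).
  exists (mkState 99 zf m). split; [|split; [reflexivity|]].
  - replace 29 with (4 + (24 + 1)) by lia. eapply runk_add; [exact H1|].
    eapply runk_add; [exact H2|]. reflexivity.
  - intros t Ht. pose proof (mout _ _ _ _ _ _ HM t (HMt t Ht)) as Ho. cbn [out] in Ho.
    unfold zf; cbn [zm]. unfold upd. unfold addr in Ho. revert Ho. fix_bool. intros Ho.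
    destruct (Nat.eq_dec t 0) as [->|Ht0].
    + fix_bool. rewrite (f0 _ _ _ _ HF'), Nat2Z.id, (fhi _ _ _ _ HF') by lia.
      revert Ho; fix_bool; intros Ho. rewrite <- Ho. f_equal; lia.
    + fix_bool. destruct (Nat.lt_ge_cases t 13).
      * revert Ho; fix_bool; intros Ho. rewrite (fdone _ _ _ _ HF') by lia. exact Ho.
      * revert Ho; fix_bool; intros Ho. rewrite (fout _ _ _ _ HF') by lia. exact Ho.
Qed.

Open Scope nat_scope.

Lemma min_ext n r b f g : is_min_nc_matching n r b f -> (forall i, i < n -> g i = f i) ->
  is_min_nc_matching n r b g.
Proof.
  intros [[[Hr Hi] Hnc] Hmin] E.
  assert (Hw : weight n r b g = weight n r b f)
    by (unfold weight; apply sumR_ext; intros i Hi'; rewrite E; auto).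
  split; [split; [split|]|].
  - intros i Hi'; rewrite E; auto.
  - intros i j Hi' Hj' Hij; rewrite !E in Hij; auto.
  - intros i j Hi' Hj' Hne Hc. apply (Hnc i j Hi' Hj' Hne). revert Hc; apply cross_ext; apply E; auto.
  - intros g' Hg'. rewrite Hw. apply Hmin; auto.
Qed.

Theorem mainTheorem6 :
  exists (p : list instr) (c : nat),
    forall (n : nat) (r b : nat -> R),
      input_ok n r b ->
      exists s' : state,
        exec p (c * n + c) (init_state n r b) = Some s' /\
        (forall i, (i < n)%nat -> (0 <= zm s' (S i))%Z) /\
        is_min_nc_matching n r b (output_matching s').
Proof.
  exists prog, 60. intros n r b Hok.
  destruct (start n r b) as (z0 & m0 & R0 & C0).
  destruct (copy_loop n r b (n + n - 0) 0 z0 m0 eq_refl C0) as (z1 & m1 & R1 & C1).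
  destruct (setup n r b z1 m1 C1) as (z2 & m2 & R2 & M2).
  destruct (main_loop n r b Hok (n + n) ainit z2 m2 (inv_init n r b Hok) M2 ltac:(simpl; lia))
    as (k3 & z3 & m3 & Hk3 & R3 & M3).
  destruct (aiter_inv n r b (n + n) ainit Hok (inv_init n r b Hok)) as [HI HIJ]; [simpl; lia|].
  pose proof (alg_correct n r b Hok) as Hcorr.
  remember (aiter n r b (n + n) ainit) as sf eqn:Esf. clear Esf.
  destruct sf as [i j st c o]. simpl in HIJ.
  pose proof (iv_i _ _ _ _ HI) as Hi. pose proof (iv_j _ _ _ _ HI) as Hj. simpl in Hi, Hj.
  assert (i = n) by lia. assert (j = n) by lia. subst i j.
  assert (st = []) by (pose proof (iv_len _ _ _ _ HI) as Hl; simpl in Hl; destruct st; auto; destruct c; simpl in Hl; lia).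
  subst st.
  assert (HMt : forall t, t < n -> matched (mkA n n [] c o) t) by (intros t Ht; split; simpl; [lia|tauto]).
  destruct (final_sim n r b c o z3 m3 M3 HMt) as (s' & R4 & Hhalt & Hout).
  exists s'. split; [|split].
  - eapply exec_runk; [|exact Hhalt|].
    + eapply runk_add; [exact R0|]. eapply runk_add; [exact R1|]. eapply runk_add; [exact R2|].
      eapply runk_add; [exact R3|]. exact R4.
    + lia.
  - intros t Ht. rewrite Hout by auto. lia.
  - apply (min_ext n r b o); auto. intros t Ht. unfold output_matching. rewrite Hout by auto. apply Nat2Z.id.
Qed.
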